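(* Let $S(z)$ be a Rosenbrock system matrix and $\lambda\in\mathbb{C}$ with $S(\lambda)$ invertible. Then $$\eta^{\mathbb{S}}(\lambda,A,B)=(\mu_{\mathcal{S}}(M))^{-1},\qquad M=S(\lambda)^{-1}\begin{bmatrix}I_r&I_r\\0_{n,r}&0_{n,r}\end{bmatrix},$$ where $\mathcal{S}=\{\operatorname{diag}(\Delta_1,\Delta_2) : \Delta_1\in\mathbb{C}^{r,r},\ \Delta_2\in\mathbb{C}^{r,n}\}$.
   Context: A Rosenbrock system matrix is $S(z)=\begin{bmatrix}A-zI_r & B\\ C & P(z)\end{bmatrix}$ with $A\in\mathbb{C}^{r,r}$, $B\in\mathbb{C}^{r,n}$, $C\in\mathbb{C}^{n,r}$, $P(z)=\sum_{k=0}^d z^kA_k$, $A_k\in\mathbb{C}^{n,n}$. $\|\cdot\|$ is the spectral norm. The backward error with perturbation of blocks $A$ and $B$ only is $\eta^{\mathbb{S}}(\lambda,A,B):=\inf\{\max\{\|\Delta_A\|,\|\Delta_B\|\} : \Delta_A\in\mathbb{C}^{r,r},\Delta_B\in\mathbb{C}^{r,n},\ \det(S(\lambda)-\begin{bmatrix}\Delta_A&\Delta_B\\0&0\end{bmatrix})=0\}$. Structured $\mu$-value: for $M\in\mathbb{C}^{k,p}$ and $\mathcal{S}\subseteq\mathbb{C}^{p,k}$, $\mu_{\mathcal{S}}(M):=\big(\inf\{\|\Delta\| : \Delta\in\mathcal{S},\ \det(I_p-\Delta M)=0\}\big)^{-1}$, with $\mu_{\mathcal S}(M)=0$ if no such $\Delta$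 exists; $\operatorname{diag}$ of rectangular blocks is the block-diagonal matrix with those blocks. *)

(* Defs.v *)
From HB Require Import structures.
From mathcomp Require Import all_boot all_order all_algebra.
From mathcomp Require Import all_classical all_reals ereal.
From mathcomp Require Import complex.
Set Implicit Arguments. Unset Strict Implicit. Unset Printing Implicit Defensive.
Import Order.TTheory GRing.Theory Num.Theory.
Local Open Scope ring_scope.
Local Open Scope classical_set_scope.

Definition vnorm2 (R : realType) (m : nat) (x : 'cV[R[i]]_m) : R :=
  Num.sqrt (\sum_(i < m) (ComplexField.Normc.normc (x i 0)) ^+ 2).

Definition specnorm (R : realType) (m n : nat) (A : 'M[R[i]]_(m, n)) : R :=
  sup [set vnorm2 (A *m x) | x in [set x : 'cV[R[i]]_n | vnorm2 x <= 1]].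

Definition polyM (R : realType) (n d : nat) (Ak : 'I_d.+1 -> 'M[R[i]]_n)
  (z : R[i]) : 'M[R[i]]_n := \sum_(k < d.+1) (z ^+ k) *: Ak k.

Definition rosenbrock (R : realType) (r n d : nat)
  (A : 'M[R[i]]_r) (B : 'M[R[i]]_(r, n)) (C : 'M[R[i]]_(n, r))
  (Ak : 'I_d.+1 -> 'M[R[i]]_n) (z : R[i]) : 'M[R[i]]_(r + n) :=
  block_mx (A - z%:M) B C (polyM Ak z).

Definition eta_AB (R : realType) (r n d : nat)
  (A : 'M[R[i]]_r) (B : 'M[R[i]]_(r, n)) (C : 'M[R[i]]_(n, r))
  (Ak : 'I_d.+1 -> 'M[R[i]]_n) (lam : R[i]) : \bar R :=
  ereal_inf [set e : \bar R | exists (DA : 'M[R[i]]_r) (DB : 'M[R[i]]_(r, n)),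
      \det (rosenbrock A B C Ak lam - block_mx DA DB 0 0) = 0 /\
      e = (Num.max (specnorm DA) (specnorm DB))%:E].

(* Structured mu-value: mu_S(M) = (inf{||D|| : D in S, det(I_p - D M) = 0})^-1,
   with inf of the empty set = +oo and +oo^-1 = 0 (so mu = 0 if no such D). *)
Definition mu_S (R : realType) (k p : nat) (S : set 'M[R[i]]_(p, k))
  (M : 'M[R[i]]_(k, p)) : \bar R :=
  let nu : \bar R := ereal_inf [set (specnorm D)%:E
     | D in [set D | S D /\ \det (1%:M - D *m M) = 0]] in
  (nu ^-1)%E.

Definition blockdiag_set (R : realType) (r n : nat) : set 'M[R[i]]_(r + r, r + n) :=
  [set D | exists (D1 : 'M[R[i]]_r) (D2 : 'M[R[i]]_(r, n)), D = block_mx D1 0 0 D2].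

(* Main.v *)
Require Import Defs.
From HB Require Import structures.
From mathcomp Require Import all_boot all_order all_algebra.
From mathcomp Require Import all_classical all_reals ereal.
From mathcomp Require Import complex.
From mathcomp Require Import lra.
Set Implicit Arguments. Unset Strict Implicit.
Import Order.TTheory GRing.Theory Num.Theory.
Local Open Scope ring_scope.
Local Open Scope classical_set_scope.

Section Aux.
Variable R : realType.
Notation nc := (@ComplexField.Normc.normc R).
Definition ss (m : nat) (x : 'cV[R[i]]_m) : R := \sum_(i < m) (nc (x i 0)) ^+ 2.

Lemma nc_ge0 (z : R[i]) : 0 <= nc z.
Proof. by case: z => a b; rewrite /= sqrtr_ge0. Qed.

Lemma ncD (a b : R[i]) : nc (a + b) <= nc a + nc b.
Proof. exact: (@le_normcD R a b). Qed.

Lemma nc_real (c : R) : 0 <= c -> nc (c%:C)%C = c.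
Proof. by move=> c0; rewrite /= expr0n /= addr0 sqrtr_sqr ger0_norm. Qed.

Lemma ss_ge0 m (x : 'cV[R[i]]_m) : 0 <= ss x.
Proof. by apply: sumr_ge0 => i _; rewrite sqr_ge0. Qed.

Lemma vnorm2E m (x : 'cV[R[i]]_m) : vnorm2 x = Num.sqrt (ss x).
Proof. by []. Qed.

Lemma vnorm2_ge0 m (x : 'cV[R[i]]_m) : 0 <= vnorm2 x.
Proof. exact: sqrtr_ge0. Qed.

Lemma vnorm2_sqr m (x : 'cV[R[i]]_m) : vnorm2 x ^+ 2 = ss x.
Proof. by rewrite vnorm2E sqr_sqrtr // ss_ge0. Qed.

Lemma vnorm2Z m (c : R) (x : 'cV[R[i]]_m) : 0 <= c ->
  vnorm2 ((c%:C)%C *: x) = c * vnorm2 x.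
Proof.
move=> c0; rewrite !vnorm2E /ss.
under eq_bigr => i _ do rewrite mxE ComplexField.Normc.normcM nc_real // exprMn.
by rewrite -mulr_sumr sqrtrM ?sqr_ge0 // sqrtr_sqr ger0_norm.
Qed.

Lemma vnorm2_eq0 m (x : 'cV[R[i]]_m) : vnorm2 x = 0 -> x = 0.
Proof.
rewrite vnorm2E => /eqP; rewrite sqrtr_eq0 => h.
have h0 : ss x = 0 by apply/le_anti; rewrite h ss_ge0.
move/eqP: h0; rewrite psumr_eq0 => [/allP H|i _]; last by rewrite sqr_ge0.
apply/matrixP => i j; rewrite ord1 mxE.
apply: ComplexField.Normc.eq0_normc; apply/eqP.
by have := H i (mem_index_enum _); rewrite /= sqrf_eq0.
Qed.

Lemma ss_col m1 m2 (x1 : 'cV[R[i]]_m1) (x2 : 'cV[R[i]]_m2) :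
  ss (col_mx x1 x2) = ss x1 + ss x2.
Proof.
by rewrite /ss big_split_ord /=; congr (_ + _); apply: eq_bigr => i _;
  rewrite ?col_mxEu ?col_mxEd.
Qed.

Lemma vnorm2_0 m : vnorm2 (0 : 'cV[R[i]]_m) = 0.
Proof.
rewrite vnorm2E /ss big1 ?sqrtr0 // => i _; rewrite mxE.
by rewrite (ComplexField.Normc.normc0 R) expr0n.
Qed.

Lemma nc_le_vnorm2 m (x : 'cV[R[i]]_m) j : nc (x j 0) <= vnorm2 x.
Proof.
rewrite vnorm2E -[nc (x j 0)]ger0_norm ?nc_ge0 // -sqrtr_sqr ler_sqrt ?ss_ge0 //.
rewrite /ss (bigD1 j) //= lerDl sumr_ge0 // => i _; exact: sqr_ge0.
Qed.

Lemma nc_sum I (s : seq I) (P : pred I) (F : I -> R[i]) :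
  nc (\sum_(i <- s | P i) F i) <= \sum_(i <- s | P i) nc (F i).
Proof.
apply: (big_rec2 (fun y1 y2 => nc y1 <= y2)).
  by rewrite (ComplexField.Normc.normc0 R).
move=> i y1 y2 _ h; apply: le_trans (ncD _ _) _; exact: lerD.
Qed.

Definition Kb m k (A : 'M[R[i]]_(m, k)) : R :=
  Num.sqrt (\sum_(i < m) (\sum_(j < k) nc (A i j)) ^+ 2).

Lemma vnorm2_bound m k (A : 'M[R[i]]_(m, k)) x :
  vnorm2 x <= 1 -> vnorm2 (A *m x) <= Kb A.
Proof.
move=> hx; rewrite vnorm2E /Kb ler_sqrt; last first.
  by apply: sumr_ge0 => i _; apply: sqr_ge0.
apply: ler_sum => i _; apply: lerXn2r.
- by rewrite nnegrE nc_ge0.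
- by rewrite nnegrE; apply: sumr_ge0 => j _; apply: nc_ge0.
rewrite mxE; apply: le_trans (nc_sum _ _ _) _; apply: ler_sum => j _.
rewrite ComplexField.Normc.normcM -[X in _ <= X]mulr1 ler_wpM2l ?nc_ge0 //.
exact: le_trans (nc_le_vnorm2 _ _) hx.
Qed.

Definition SN m k (A : 'M[R[i]]_(m, k)) :=
  [set vnorm2 (A *m x) | x in [set x : 'cV[R[i]]_k | vnorm2 x <= 1]].

Lemma SN_ub m k (A : 'M[R[i]]_(m, k)) : has_ubound (SN A).
Proof. by exists (Kb A) => y [x hx <-]; apply: vnorm2_bound. Qed.

Lemma SN_n0 m k (A : 'M[R[i]]_(m, k)) : SN A !=set0.
Proof.
exists (vnorm2 (A *m 0)); exists 0 => //=.
by rewrite vnorm2_0 ler01.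
Qed.

Lemma sn_upper m k (A : 'M[R[i]]_(m, k)) x :
  vnorm2 x <= 1 -> vnorm2 (A *m x) <= specnorm A.
Proof. by move=> hx; apply: (ub_le_sup (SN_ub A)); exists x. Qed.

Lemma sn_ge0 m k (A : 'M[R[i]]_(m, k)) : 0 <= specnorm A.
Proof.
have h := @sn_upper m k A 0; rewrite mulmx0 !vnorm2_0 in h; apply: h.
exact: ler01.
Qed.

Lemma sn_least m k (A : 'M[R[i]]_(m, k)) c :
  (forall x, vnorm2 x <= 1 -> vnorm2 (A *m x) <= c) -> specnorm A <= c.
Proof. by move=> h; apply: ge_sup (SN_n0 A) _ => y [x hx <-]; apply: h. Qed.

Lemma sn_mul m k (A : 'M[R[i]]_(m, k)) x :
  vnorm2 (A *m x) <= specnorm A * vnorm2 x.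
Proof.
have [/vnorm2_eq0 ->|nz] := eqVneq (vnorm2 x) 0.
  by rewrite mulmx0 !vnorm2_0 mulr0.
have cpos : 0 < vnorm2 x by rewrite lt_def nz vnorm2_ge0.
set c := vnorm2 x.
have h1 : vnorm2 (((c^-1)%:C)%C *: x) <= 1.
  by rewrite vnorm2Z ?invr_ge0 ?vnorm2_ge0 // mulVf.
have := sn_upper A h1; rewrite -scalemxAr vnorm2Z ?invr_ge0 ?vnorm2_ge0 //.
by rewrite ler_pdivrMl // mulrC.
Qed.

Lemma sn_blockdiag r n (D1 : 'M[R[i]]_r) (D2 : 'M[R[i]]_(r, n)) :
  specnorm (block_mx D1 0 0 D2) = Num.max (specnorm D1) (specnorm D2).
Proof.
set D := block_mx D1 0 0 D2.
have hmul x1 x2 : D *m col_mx x1 x2 = col_mx (D1 *m x1) (D2 *m x2).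
  by rewrite mul_block_col !mul0mx addr0 add0r.
apply/le_anti/andP; split.
  apply: sn_least => x hx.
  set M := Num.max (specnorm D1) (specnorm D2).
  have h1 : specnorm D1 <= M by rewrite le_max lexx.
  have h2 : specnorm D2 <= M by rewrite le_max lexx orbT.
  have g1 := sn_ge0 D1; have g2 := sn_ge0 D2.
  rewrite -(vsubmxK x) hmul in hx *.
  set x1 := usubmx x in hx *; set x2 := dsubmx x in hx *.
  have e1 := sn_mul D1 x1; have e2 := sn_mul D2 x2.
  have hs := vnorm2_sqr (col_mx x1 x2); rewrite ss_col -!vnorm2_sqr in hs.
  have hs' := vnorm2_sqr (col_mx (D1 *m x1) (D2 *m x2)).
  rewrite ss_col -!vnorm2_sqr in hs'.
  have := vnorm2_ge0 x1; have := vnorm2_ge0 x2; have := vnorm2_ge0 (D1 *m x1).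
  have := vnorm2_ge0 (D2 *m x2); have := vnorm2_ge0 (col_mx x1 x2).
  have := vnorm2_ge0 (col_mx (D1 *m x1) (D2 *m x2)).
  move: hs hs' hx e1 e2 h1 h2 g1 g2.
  set a := vnorm2 (D1 *m x1); set b := vnorm2 (D2 *m x2).
  set u := vnorm2 x1; set v := vnorm2 x2.
  set X := vnorm2 (col_mx x1 x2); set Y := vnorm2 (col_mx (D1 *m x1) (D2 *m x2)).
  set s1 := specnorm D1; set s2 := specnorm D2.
  move=> hs hs' hx e1 e2 h1 h2 g1 g2 gY gX gb ga gv gu.
  have ha' : a <= M * u by apply: le_trans e1 _; rewrite ler_wpM2r.
  have hb' : b <= M * v by apply: le_trans e2 _; rewrite ler_wpM2r.
  have ha : a ^+ 2 <= M ^+ 2 * u ^+ 2.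
    by rewrite -exprMn lerXn2r // nnegrE // mulr_ge0 // (le_trans g1).
  have hb : b ^+ 2 <= M ^+ 2 * v ^+ 2.
    by rewrite -exprMn lerXn2r // nnegrE // mulr_ge0 // (le_trans g2).
  have gM : 0 <= M by apply: le_trans h1.
  have hX2 : X ^+ 2 <= 1 by rewrite -(expr1n _ 2) lerXn2r // nnegrE.
  have hM2 : 0 <= M ^+ 2 by rewrite sqr_ge0.
  have hY : Y ^+ 2 <= M ^+ 2.
    rewrite hs' (le_trans (lerD ha hb)) // -mulrDr -hs.
    by rewrite -[X in _ <= X]mulr1 ler_wpM2l.
  by rewrite -(@ler_pXn2r _ 2) ?nnegrE.
rewrite ge_max; apply/andP; split; apply: sn_least => x hx.
  have := sn_upper D (x := col_mx x 0).
  rewrite hmul mulmx0 => h; apply: le_trans (h _).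
    by rewrite -[X in X <= _]ger0_norm ?vnorm2_ge0 // -[X in _ <= X]ger0_norm
      ?vnorm2_ge0 // -!sqrtr_sqr !vnorm2_sqr ss_col -(vnorm2_sqr 0) vnorm2_0
      expr0n addr0.
  by rewrite -[X in X <= _]ger0_norm ?vnorm2_ge0 // -sqrtr_sqr vnorm2_sqr ss_col
    -(vnorm2_sqr 0) vnorm2_0 expr0n addr0 -vnorm2_sqr sqrtr_sqr ger0_norm
    ?vnorm2_ge0.
have := sn_upper D (x := col_mx 0 x).
rewrite hmul mulmx0 => h; apply: le_trans (h _).
  by rewrite -[X in X <= _]ger0_norm ?vnorm2_ge0 // -[X in _ <= X]ger0_norm
    ?vnorm2_ge0 // -!sqrtr_sqr !vnorm2_sqr ss_col -(vnorm2_sqr 0) vnorm2_0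
    expr0n add0r.
by rewrite -[X in X <= _]ger0_norm ?vnorm2_ge0 // -sqrtr_sqr vnorm2_sqr ss_col
  -(vnorm2_sqr 0) vnorm2_0 expr0n add0r -vnorm2_sqr sqrtr_sqr ger0_norm
  ?vnorm2_ge0.
Qed.
End Aux.

Lemma sylvester (K : comNzRingType) m k (P : 'M[K]_(m, k)) (Q : 'M[K]_(k, m)) :
  \det (1%:M - P *m Q) = \det (1%:M - Q *m P).
Proof.
have e1 : block_mx 1%:M P Q 1%:M =
   block_mx 1%:M 0 Q 1%:M *m block_mx 1%:M P 0 (1%:M - Q *m P).
  by rewrite mulmx_block ?mul1mx ?mulmx1 ?mul0mx ?mulmx0 ?addr0 ?add0r (addrC (Q *m P)) subrK.
have e2 : block_mx 1%:M P Q 1%:M =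
   block_mx 1%:M P 0 1%:M *m block_mx (1%:M - P *m Q) 0 Q 1%:M.
  by rewrite mulmx_block ?mul1mx ?mulmx1 ?mul0mx ?mulmx0 ?addr0 ?add0r subrK.
have := congr1 determinant e1; rewrite e2 !det_mulmx det_lblock det_ublock.
by rewrite det_ublock det_lblock !det1 !mul1r mulr1.
Qed.


Lemma det_equiv (R : realType) r n (S : 'M[R[i]]_(r + n))
  (DA : 'M[R[i]]_r) (DB : 'M[R[i]]_(r, n)) : S \in unitmx ->
  (\det (S - block_mx DA DB 0 0) = 0) <->
  (\det (1%:M - block_mx DA 0 0 DB *m
     (invmx S *m col_mx (row_mx (1%:M : 'M[R[i]]_r) (1%:M : 'M[R[i]]_r))
                  (0 : 'M[R[i]]_(n, r + r)))) = 0).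
Proof.
move=> uS.
set E := col_mx _ _; set D := block_mx DA 0 0 DB.
have eED : block_mx DA DB 0 0 = E *m D.
  rewrite /E /D mul_col_mx mul_row_block mul0mx !mul1mx !addr0 add0r.
  by rewrite -row_mx0 /block_mx.
have eS : S - E *m D = S *m (1%:M - (invmx S *m E) *m D).
  by rewrite mulmxBr mulmx1 !mulmxA mulmxV // mul1mx.
rewrite eED eS det_mulmx -sylvester.
have dS : \det S != 0 by move: uS; rewrite unitmxE unitfE.
split; first by move/eqP; rewrite mulf_eq0 (negPf dS) /= => /eqP.
by move=> ->; rewrite mulr0.
Qed.

Unset Implicit Arguments.
Local Close Scope classical_set_scope.

Theorem theorem2p4 (R : realType) (r n d : nat)
  (A : 'M[R[i]]_r) (B : 'M[R[i]]_(r, n)) (C : 'M[R[i]]_(n, r))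
  (Ak : 'I_d.+1 -> 'M[R[i]]_n) (lam : R[i]) :
  rosenbrock A B C Ak lam \in unitmx ->
  eta_AB A B C Ak lam =
  ((mu_S (@blockdiag_set R r n)
     (invmx (rosenbrock A B C Ak lam)
        *m col_mx (row_mx (1%:M : 'M[R[i]]_r) (1%:M : 'M[R[i]]_r))
                  (0 : 'M[R[i]]_(n, r + r))))^-1)%E.
Proof.
move=> uS; rewrite /mu_S /= inveK /eta_AB; congr ereal_inf.
apply/seteqP; split => e.
  move=> [DA [DB [hdet ->]]]; exists (block_mx DA 0 0 DB).
    by split; [exists DA, DB | apply/det_equiv].
  by rewrite sn_blockdiag.
move=> [D [[D1 [D2 ->]] hdet] <-]; exists D1, D2; split.
  by apply/(det_equiv _ _ uS).
by rewrite sn_blockdiag.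
Qed.
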